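(* Let $n>1$ be an integer, let $\delta>0$ be a real number with $\delta\le (n-1)6^{-n}/c_6$ where $c_6=\sqrt3/8$, and let $M=\{(-2,\dots,-2)+\delta\mathbf z:\mathbf z\in\mathbb{Z}^{n-1}\}\subset\mathbb{R}^{n-1}$. Then $$\#(M\cap I'_{n-1})\le c_7\frac{4^{n-1}}{(n-1)!\,\delta^{n-1}},$$ where $c_7=(1+\sqrt3/162)^3$ and $I'_{n-1}=\{(x_1,\dots,x_{n-1})\in\mathbb{R}^{n-1}: -2\le x_1\le\cdots\le x_{n-1}<2\}$. *)

(* Defs.v *)
From mathcomp Require Import all_boot all_order all_algebra.
From mathcomp Require Import boolp reals.
Set Implicit Arguments. Unset Strict Implicit. Unset Printing Implicit Defensive.
Import Order.TTheory GRing.Theory Num.Theory.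
Local Open Scope ring_scope.

Definition c6 (R : realType) : R := Num.sqrt 3 / 8.
Definition c7 (R : realType) : R := (1 + Num.sqrt 3 / 162) ^+ 3.

Definition latticeM (R : realType) (m : nat) (delta : R) : pred 'rV[R]_m :=
  fun x => `[< exists z : 'rV[int]_m,
                 x = const_mx (-2) + delta *: map_mx (fun k : int => k%:~R) z >].

Definition Iprime (R : realType) (m : nat) : pred 'rV[R]_m :=
  fun x => `[< (forall i : 'I_m, -2 <= x ord0 i /\ x ord0 i < 2) /\
               (forall i j : 'I_m, (i <= j)%N -> x ord0 i <= x ord0 j) >].

(* Main.v *)
Require Import Defs.
From mathcomp Require Import all_boot all_order all_algebra.
From mathcomp Require Import boolp reals.
From mathcomp Require Import ring lra zify.
Import Order.TTheory GRing.Theory Num.Theory.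
Local Open Scope ring_scope.

Lemma Pstep (R : realFieldType) (b : R) (m : nat) : 0 <= b ->
  (\prod_(j < m) (1 + j.+1%:R * b)) * (2 - (m%:R * m.+1%:R) * b) <= 2.
Proof.
move=> b0; elim: m => [|m IH].
  by rewrite big_ord0 mul1r mul0r mul0r subr0.
rewrite big_ord_recr /=.
set P := \prod_(_ < _) _ in IH *.
have P0 : 0 <= P by apply: prodr_ge0 => i _; rewrite addr_ge0 // mulr_ge0.
rewrite -[(m.+1).+1]addn2 -[m.+1]addn1 !natrD in IH *.
set k : R := m%:R in IH *.
have k0 : 0 <= k by rewrite ler0n.
have c0 : 0 <= (k + 1) * b by rewrite mulr_ge0 // addr_ge0.
have t0 : 0 <= k * (k + 1) * b by rewrite !mulr_ge0 // addr_ge0.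
have ct : 0 <= ((k + 1) * b) * (k * (k + 1) * b) by rewrite mulr_ge0.
have cc : 0 <= ((k + 1) * b) * ((k + 1) * b) by rewrite mulr_ge0.
have H : (1 + (k + 1) * b) * (2 - (k + 1) * (k + 2) * b) <= 2 - k * (k + 1) * b.
  have -> : (1 + (k + 1) * b) * (2 - (k + 1) * (k + 2) * b) =
     2 - k * (k + 1) * b - ((k + 1) * b) * (k * (k + 1) * b) - 2 * (((k + 1) * b) * ((k + 1) * b)) by ring.
  lra.
rewrite -mulrA; exact: le_trans (ler_wpM2l P0 H) IH.
Qed.

Lemma nat_ineq k : ((k+3) * (k+3) * (k+4) <= 6 ^ (k+2))%N.
Proof.
elim: k => [|k IH]; first by [].
rewrite (_ : (6 ^ (k.+1 + 2) = 6 * 6 ^ (k + 2))%N); last by rewrite addSn expnS.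
have : ((k.+1 + 3) * (k.+1 + 3) * (k.+1 + 4) <= 6 * ((k + 3) * (k + 3) * (k + 4)))%N.
  nia.
move=> h; apply: (leq_trans h); by rewrite leq_mul2l IH orbT.
Qed.

Lemma c7_ge (R : realType) (e : R) : 0 <= e -> 1 + 3 * e <= (1 + e) ^+ 3.
Proof.
move=> e0; have -> : (1 + e) ^+ 3 = 1 + 3 * e + 3 * (e * e) + e * (e * e).
  by rewrite !exprS expr0; ring.
have : 0 <= e * e by rewrite mulr_ge0.
have : 0 <= e * (e * e) by rewrite !mulr_ge0.
lra.
Qed.

Lemma Pbound (R : realType) (b : R) m : (0 < m)%N -> 0 <= b ->
  b * Num.sqrt 3 * 6 ^+ m.+1 <= 2 * m%:R ->
  \prod_(j < m) (1 + j.+1%:R * b) <= c7 R.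
Proof.
move=> m0 b0 hb.
set s := Num.sqrt 3 in hb *.
have s0 : 0 < s by rewrite sqrtr_gt0; lra.
have ss : s * s = 3 by rewrite -expr2 sqr_sqrtr //; lra.
have s2 : s <= 2 by nra.
rewrite /c7 -/s.
set e := s / 162.
have e0 : 0 <= e by rewrite /e; lra.
case: m m0 hb => [//|[|[|k]]] _ hb.
- rewrite big_ord1 mul1r.
  have h1 : b * s * 36 <= 2 by move: hb; rewrite !exprS expr0; lra.
  have h2 : b * (s * s) * 36 <= 2 * s.
    have := ler_wpM2r (ltW s0) h1; lra.
  rewrite ss in h2.
  have h3 := @c7_ge R e e0; move: h3; rewrite /e; lra.
- rewrite big_ord_recr big_ord1 /= mul1r.
  have h1 : b * s * 216 <= 4 by move: hb; rewrite !exprS expr0; lra.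
  have h2 : b * (s * s) * 216 <= 4 * s.
    have := ler_wpM2r (ltW s0) h1; lra.
  rewrite ss in h2.
  have be : b <= e by rewrite /e; lra.
  have -> : (1 + e) ^+ 3 = (1 + e) * ((1 + e) * (1 + e)) by rewrite !exprS expr0 mulr1.
  apply: ler_pM; [lra|lra|lra|].
  have : 0 <= e * e by rewrite mulr_ge0.
  have : 2%:R * b <= 2 * e by lra.
  nra.
- have hP := @Pstep R b k.+3 b0.
  set P := \prod_(_ < _) _ in hP *.
  have P0 : 0 <= P by apply: prodr_ge0 => i _; rewrite addr_ge0 // mulr_ge0.
  set M : R := (k.+3)%:R in hP hb.
  have M0 : 0 <= M by rewrite ler0n.
  have e4 : (k.+4)%:R = M + 1 :> R by rewrite /M -addn1 natrD.
  rewrite e4 in hP.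
  set X : R := 6 ^+ k.+2.
  have X0 : 0 < X by rewrite exprn_gt0.
  have h6 : (6:R) ^+ k.+4 = 36 * X by rewrite /X !exprS; ring.
  rewrite h6 in hb.
  have hn : (k.+3 * k.+3 * k.+4 <= 6 ^ k.+2)%N by have := nat_ineq k; rewrite !addn3 addn4 addn2.
  have hnR : M * M * (M + 1) <= X.
    by rewrite -e4 /M /X -natrX -!natrM ler_nat.
  set y := M * (M + 1) * b in hP.
  have y0 : 0 <= y by rewrite /y !mulr_ge0 // addr_ge0.
  have hy1 := ler_wpM2r (mulr_ge0 M0 (addr_ge0 M0 ler01)) hb.
  have hy2 : (y * s * 36) * X <= 2 * X.
    have -> : (y * s * 36) * X = b * s * (36 * X) * (M * (M + 1)) by rewrite /y; ring.
    apply: (le_trans hy1).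
    have -> : 2 * M * (M * (M + 1)) = 2 * (M * M * (M + 1)) by ring.
    lra.
  rewrite ler_pM2r // in hy2.
  have hy3 := ler_wpM2r (ltW s0) hy2.
  have hy4 : y * 108 <= 2 * s.
    have -> : y * 108 = y * (s * s) * 36 by rewrite ss; ring.
    move: hy3; rewrite mulrA; lra.
  have ye : y <= 3 * e by rewrite /e; lra.
  have ee : e * e <= e / 3.
    have : e <= 1 / 3 by rewrite /e; lra.
    nra.
  have h2 : 2 <= (1 + 3 * e) * (2 - y).
    have : 0 <= (1 + 3 * e) * (3 * e - y) by rewrite mulr_ge0 //; lra.
    have -> : (1 + 3 * e) * (2 - y) = (1 + 3 * e) * (3 * e - y) + 2 + 3 * e - 9 * (e * e) by ring.
    lra.
  have hPe : P <= 1 + 3 * e.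
    have y2 : 0 < 2 - y by rewrite /e in ye; lra.
    rewrite -(ler_pM2r y2); exact: le_trans hP h2.
  have h3 := @c7_ge R e e0; lra.
Qed.

Set Implicit Arguments. Unset Strict Implicit.

Lemma point_facts (R : realType) m (d : R) (x : 'rV[R]_m) : 0 < d ->
  latticeM d x && Iprime x ->
  (forall i, (x ord0 i + 2) / d = (Num.truncn ((x ord0 i + 2) / d))%:R /\
             (Num.truncn ((x ord0 i + 2) / d) <= Num.truncn (4 / d))%N) /\
  (forall i j : 'I_m, (i <= j)%N -> x ord0 i <= x ord0 j).
Proof.
move=> d0 /andP [/asboolP [z xz] /asboolP [hI hmon]]; split => // i.
have [h1 h2] := hI i.
have ex : x ord0 i = -2 + d * (z ord0 i)%:~R.
  by rewrite xz !mxE.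
have eq1 : (x ord0 i + 2) / d = (z ord0 i)%:~R by rewrite ex; field; lra.
rewrite eq1.
case hz : (z ord0 i) => [k|k].
  have -> : (Posz k)%:~R = k%:R :> R by [].
  rewrite natrK; split => //.
  rewrite truncn_ge_nat; last by rewrite divr_ge0 // ltW.
  have : d * k%:R < 4 by move: h2; rewrite ex hz; lra.
  by move=> h; rewrite ler_pdivlMr // mulrC ltW.
exfalso; move: h1; rewrite ex hz NegzE mulrNz.
have : 0 < d * k.+1%:R by rewrite mulr_gt0 // ltr0n.
lra.
Qed.

Lemma count_bound (R : realType) m (d : R) (s : seq 'rV[R]_m) : 0 < d ->
  uniq s -> (forall x, x \in s -> latticeM d x && Iprime x) ->
  (size s <= 'C(m + Num.truncn (4 / d), m))%N.
Proof.
move=> d0 us hs.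
set N := Num.truncn (4 / d).
pose g (x : 'rV[R]_m) (i : 'I_m) := Num.truncn ((x ord0 i + 2) / d).
pose F (x : 'rV[R]_m) : m.-tuple 'I_N.+1 := [tuple (inord (g x i) : 'I_N.+1) | i < m].
have Fval x i : x \in s -> val (tnth (F x) i) = g x i.
  move=> xs; have [hp _] := point_facts d0 (hs x xs).
  by rewrite tnth_mktuple /= inordK // ltnS; case: (hp i).
have Finj : {in s &, injective F}.
  move=> x y xs ys Fxy; apply/rowP => i.
  have e1 := congr1 (fun t => val (tnth t i)) Fxy; rewrite /= !Fval // in e1.
  have [hpx _] := point_facts d0 (hs x xs).
  have [hpy _] := point_facts d0 (hs y ys).
  have [ex _] := hpx i; have [ey _] := hpy i.
  move: ex ey; rewrite /g in e1; rewrite e1 => ex ey.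
  have : (x ord0 i + 2) / d = (y ord0 i + 2) / d by exact: etrans ex (esym ey).
  move=> h; have := congr1 ( *%R^~ d) h; rewrite !divfK ?gt_eqF //.
  lra.
rewrite -(card_sorted_tuples m N) cardE -(size_map F).
apply: uniq_leq_size; first by rewrite map_inj_in_uniq.
move=> t /mapP [x xs ->]; rewrite mem_enum inE.
have [hp hmon] := point_facts d0 (hs x xs).
have -> : [seq val i | i <- F x] = [seq g x i | i <- enum 'I_m].
  rewrite /F /= -map_comp; apply: eq_map => i /=.
  by rewrite inordK // ltnS; case: (hp i).
rewrite sorted_map.
have : sorted (relpre val ltn) (enum 'I_m) by rewrite -sorted_map val_enum_ord iota_ltn_sorted.
apply: sub_sorted => i j /= hij.
apply: le_truncn; rewrite ler_pM2r ?invr_gt0 // lerD2r.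
by apply: hmon; rewrite ltnW.
Qed.

Lemma ffact_le (R : realFieldType) (a : R) N m : N%:R <= a ->
  ((m + N) ^_ m)%:R <= \prod_(j < m) (a + j.+1%:R).
Proof.
move=> Na; elim: m => [|m IH]; first by rewrite ffactn0 big_ord0.
rewrite addSn ffactSS natrM big_ord_recr /= mulrC.
apply: ler_pM; [exact: ler0n|exact: ler0n|exact: IH|].
rewrite -[(m + N).+1]addn1 -[m.+1]addn1 !natrD; lra.
Qed.

Lemma prod_fact (R : realFieldType) (a b : R) m : a * b = 1 ->
  \prod_(j < m) (a + j.+1%:R) = a ^+ m * \prod_(j < m) (1 + j.+1%:R * b).
Proof.
move=> ab; elim: m => [|m IH]; first by rewrite !big_ord0 expr0 mulr1.
rewrite !big_ord_recr /= IH exprSr.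
have -> : a + m.+1%:R = a * (1 + m.+1%:R * b).
  by rewrite mulrDr mulr1 mulrCA ab mulr1.
ring.
Qed.

Unset Implicit Arguments.

Theorem lemma2p3p2 (R : realType) (n : nat) (delta : R) :
  (1 < n)%N -> 0 < delta ->
  delta <= (n.-1)%:R * (6 ^- n) / c6 R ->
  forall s : seq 'rV[R]_(n.-1),
    uniq s ->
    (forall x, x \in s -> latticeM delta x && Iprime x) ->
    (size s)%:R <= c7 R * (4 ^+ n.-1) / ((n.-1)`!%:R * delta ^+ n.-1).
Proof.
case: n => [//|m] /= m1 d0 hd s us hs.
have m0 : (0 < m)%N by [].
have hc := count_bound d0 us hs.
set N := Num.truncn (4 / delta) in hc.
set a := 4 / delta.
have a0 : 0 < a by rewrite divr_gt0.
have Na : N%:R <= a by rewrite truncn_le ltW.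
have hf := ffact_le m Na.
pose sq : R := Num.sqrt 3.
have sq0 : 0 < sq by rewrite sqrtr_gt0; lra.
pose Y : R := 6 ^+ m.+1.
have Y0 : 0 < Y by rewrite exprn_gt0.
have hb : delta / 4 * sq * Y <= 2 * m%:R.
  move: hd; rewrite /c6 -/sq -/Y ler_pdivlMr ?divr_gt0 // ler_pdivlMr //.
  lra.
have d40 : 0 <= delta / 4 by rewrite divr_ge0 // ltW.
have hP := @Pbound R (delta / 4) m m0 d40 hb.
have hab : a * (delta / 4) = 1 by rewrite /a; field; lra.
rewrite (prod_fact m hab) in hf.
set P := \prod_(_ < _) _ in hf hP.
have mf0 : 0 < m`!%:R :> R by rewrite ltr0n fact_gt0.
have dm0 : 0 < delta ^+ m by rewrite exprn_gt0.
rewrite ler_pdivlMr ?mulr_gt0 //.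
have h1 : (size s)%:R <= ('C(m + N, m))%:R :> R by rewrite ler_nat.
have h2 : ('C(m + N, m))%:R * m`!%:R <= a ^+ m * c7 R.
  rewrite -natrM bin_ffact; apply: (le_trans hf).
  by rewrite ler_pM2l // exprn_gt0.
have h4 : a ^+ m * delta ^+ m = 4 ^+ m by rewrite -exprMn /a divfK // gt_eqF.
have h3 : (size s)%:R * m`!%:R <= a ^+ m * c7 R.
  by apply: le_trans h2; rewrite ler_pM2r.
have h5 : (size s)%:R * m`!%:R * delta ^+ m <= a ^+ m * c7 R * delta ^+ m.
  by rewrite ler_pM2r.
rewrite mulrA; apply: (le_trans h5).
by rewrite mulrAC h4 mulrC.
Qed.
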